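(* For every integer $t\ge 2$ and positive integers $d,k$ there exists an integer $m=m(t,k,d)\le k^{2^{d-1}}+t-1$ with the following property: the (unordered) $t$-tuples of every finite point set $S\subset\mathbb{R}^d$ can be $k$-colored such that every axis-parallel box in $\mathbb{R}^d$ that contains at least $m$ points of $S$ contains $t$-tuples of points of $S$ colored with each of the $k$ colors.
   Context: An axis-parallel closed halfspace in $\mathbb{R}^d$ is a set $\{\mathbf{p}\mid (\mathbf{p})_i\le\beta\}$ or $\{\mathbf{p}\mid (\mathbf{p})_i\ge\beta\}$ for some coordinate $1\le i\le d$ and real $\beta$; an axis-parallel box is an intersection of such halfspaces. A $t$-tuple of points of $S$ is a $t$-element subset of $S$; a box contains it if it contains all its points. *)

(* Defs.v *)
From HB Require Import structures.
From mathcomp Require Import all_boot all_order all_algebra.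
From mathcomp Require Import finmap.
From mathcomp Require Import reals.
Set Implicit Arguments. Unset Strict Implicit. Unset Printing Implicit Defensive.
Import Order.TTheory GRing.Theory Num.Theory.
Local Open Scope ring_scope.

(* Points of R^d are row vectors 'rV[R]_d; coordinate i of p is p 0 i. *)

Definition halfspace {R : realType} {d : nat} (h : 'I_d * R * bool)
  (p : 'rV[R]_d) : bool :=
  let: (i, beta, upper) := h in
  if upper then p 0 i <= beta else beta <= p 0 i.

(* An axis-parallel box: the intersection of a (finite) list of axis-parallel
   closed halfspaces. *)
Definition in_box {R : realType} {d : nat} (H : seq ('I_d * R * bool))
  (p : 'rV[R]_d) : bool :=
  all (fun h => halfspace h p) H.

Definition box_points {R : realType} {d : nat} (H : seq ('I_d * R * bool))
  (S : {fset 'rV[R]_d}) : {fset 'rV[R]_d} :=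
  [fset p in S | in_box H p]%fset.

(* Main.v *)
Require Import Defs.
From HB Require Import structures.
From mathcomp Require Import all_boot all_order all_algebra finmap reals zify.
Import Order.TTheory GRing.Theory Num.Theory.
Set Implicit Arguments. Unset Strict Implicit. Unset Printing Implicit Defensive.

Fixpoint htf (T : eqType) (lt : rel T) (A : seq T) (n : nat) (x : T) : nat :=
  if n is n'.+1 then (\max_(y <- A | lt y x) htf lt A n' y).+1 else 0.
Definition ht (T : eqType) (lt : rel T) (A : seq T) (x : T) :=
  htf lt A (size A).+1 x.

Lemma count_lt_strict (T : eqType) (a b : pred T) (s : seq T) y :
  (forall z, a z -> b z) -> y \in s -> b y -> ~~ a y -> count a s < count b s.
Proof.
move=> ab; elim: s => //= z s IH; rewrite in_cons => /orP[/eqP<-|ys] By Ny.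
  rewrite By (negbTE Ny) add0n add1n ltnS; exact: sub_count.
have := IH ys By Ny; have : a z <= b z by case: (a z) (ab z) => // ->.
move=> h1 h2; rewrite -addnS; apply: leq_add; [exact h1|exact h2].
Qed.

Lemma htf_stable (T : eqType) (lt : rel T) A : irreflexive lt -> transitive lt ->
  forall n m x, count (lt^~ x) A < n -> count (lt^~ x) A < m ->
  htf lt A n x = htf lt A m x.
Proof.
move=> irr tr; elim=> [|n IH] [|m] x hn hm; [by []|by []|by []|].
rewrite [htf _ _ n.+1 _]/= [htf _ _ m.+1 _]/=; congr S.
rewrite big_seq_cond [in RHS]big_seq_cond; apply: eq_bigr => y /andP[yA lyx].
have hy : count (lt^~ y) A < count (lt^~ x) A.
  apply: (count_lt_strict _ yA lyx); last by rewrite /= irr.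
  by move=> z /= hz; exact: tr hz lyx.
by apply: IH; apply: leq_trans hy _; rewrite -ltnS.
Qed.

Lemma ht_eq (T : eqType) (lt : rel T) A x : irreflexive lt -> transitive lt ->
  ht lt A x = (\max_(y <- A | lt y x) ht lt A y).+1.
Proof.
move=> irr tr; rewrite /ht [htf _ _ (size A).+1 _]/=; congr S.
rewrite big_seq_cond [in RHS]big_seq_cond; apply: eq_bigr => y /andP[yA lyx].
have hy : count (lt^~ y) A < count (lt^~ x) A.
  apply: (count_lt_strict _ yA lyx); last by rewrite /= irr.
  by move=> z /= hz; exact: tr hz lyx.
have hx := count_size (lt^~ x) A.
apply: htf_stable => //; apply: leq_trans hy _ => //.
exact: leq_trans hx _.
Qed.

Lemma ht_pos (T : eqType) (lt : rel T) A x : irreflexive lt -> transitive lt ->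
  0 < ht lt A x.
Proof. by move=> irr tr; rewrite ht_eq. Qed.

Lemma ht_mono (T : eqType) (lt : rel T) A x y : irreflexive lt -> transitive lt ->
  x \in A -> lt x y -> ht lt A x < ht lt A y.
Proof.
move=> irr tr xA lxy; rewrite (ht_eq _ y irr tr) ltnS.
exact: (leq_bigmax_seq (F := ht lt A)) xA lxy.
Qed.

Lemma bigmax_attained (T : eqType) (s : seq T) (P : pred T) (F : T -> nat) :
  0 < \max_(y <- s | P y) F y ->
  exists2 y, y \in s & P y && (F y == \max_(y <- s | P y) F y).
Proof.
elim: s => [|z s IH]; first by rewrite big_nil.
rewrite big_cons; case Pz: (P z) => h.
  case: (leqP (\max_(y <- s | P y) F y) (F z)) => hz.
    by exists z; rewrite ?mem_head // Pz /=.
  have [y ys /andP[Py /eqP Fy]] := IH (leq_ltn_trans (leq0n _) hz).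
  exists y; first by rewrite in_cons ys orbT.
  by apply/andP; split => //; apply/eqP.
have [y ys Py] := IH h; by exists y; rewrite ?in_cons ?ys ?orbT.
Qed.

Lemma ht_pred (T : eqType) (lt : rel T) A y : irreflexive lt -> transitive lt ->
  1 < ht lt A y -> exists2 x, x \in A & lt x y && (ht lt A x == (ht lt A y).-1).
Proof.
move=> irr tr; rewrite (ht_eq _ y irr tr) ltnS /= => h.
have [x xA /andP[lxy /eqP e]] := bigmax_attained h.
by exists x => //; rewrite lxy e eqxx.
Qed.

Lemma ht_chain (T : eqType) (lt : rel T) A : irreflexive lt -> transitive lt ->
  forall n y, ht lt A y = n.+1 ->
  exists s, [/\ path (fun a b => lt b a) y s, {subset s <= A} & size s = n].
Proof.
move=> irr tr; elim=> [|n IH] y hy; first by exists [::].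
have [x xA /andP[lxy /eqP ex]] : exists2 x, x \in A & lt x y && (ht lt A x == (ht lt A y).-1).
  by apply: ht_pred => //; rewrite hy.
rewrite hy /= in ex; have [s [ps sA ss]] := IH x ex.
exists (x :: s); split => //=; first by rewrite lxy ps.
  by move=> z; rewrite in_cons => /orP[/eqP->|/sA].
by rewrite ss.
Qed.

Lemma ht_down (T : eqType) (lt : rel T) A : irreflexive lt -> transitive lt ->
  forall j y v, ht lt A y = v + j -> 0 < v ->
  exists2 z, ht lt A z = v & (z == y) || (lt z y && (z \in A)).
Proof.
move=> irr tr; elim=> [|j IH] y v hy v0; first by exists y; rewrite ?eqxx // hy addn0.
have [x xA /andP[lxy /eqP ex]] : exists2 x, x \in A & lt x y && (ht lt A x == (ht lt A y).-1).
  by apply: ht_pred => //; rewrite hy addnS ltnS; apply: leq_trans v0 (leq_addr _ _).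
rewrite hy addnS /= in ex; have [z hz hzx] := IH x v ex v0.
exists z => //; case/orP: hzx => [/eqP->|/andP[lzx zA]]; first by rewrite lxy xA orbT.
by rewrite (tr _ _ _ lzx lxy) zA orbT.
Qed.

Lemma path_last_below (T : eqType) (lt : rel T) : transitive lt ->
  forall s y z, path (fun a b => lt b a) y s -> z \in y :: s ->
  (z == last y s) || lt (last y s) z.
Proof.
move=> tr; elim=> [|x s IH] y z /=; first by move=> _; rewrite inE => ->.
case/andP=> lxy ps; rewrite in_cons => /orP[/eqP->|zs].
  have := IH x x ps (mem_head _ _); case/orP=> [/eqP<-|h]; first by rewrite lxy orbT.
  by rewrite (tr _ _ _ h lxy) orbT.
exact: IH.
Qed.

Lemma path_ht (T : eqType) (lt : rel T) (A : seq T) : irreflexive lt -> transitive lt ->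
  forall s y, path (fun a b => lt b a) y s -> {subset y :: s <= A} ->
  size s < ht lt A y.
Proof.
move=> irr tr; elim=> [|x s IH] y /=; first by rewrite ht_pos.
case/andP=> lxy ps sub.
have sub' : {subset x :: s <= A} by move=> w hw; apply: sub; rewrite in_cons hw orbT.
have h1 := IH x ps sub'.
have xA : x \in A by apply: sub'; exact: mem_head.
have h2 := ht_mono irr tr xA lxy.
exact: leq_ltn_trans h1 h2.
Qed.

Lemma pigeon (T : eqType) (f : T -> nat) K : forall n (s : seq T),
  (forall x, x \in s -> 0 < f x <= n) -> n * K < size s ->
  exists v, K < count (fun x => f x == v) s.
Proof.
elim=> [|n IH] s hs big.
  case: s hs big => [|x s] hs //= _; have := hs x (mem_head _ _); lia.
case: (leqP (count (fun x => f x == n.+1) s) K) => hK; last by exists n.+1.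
set s' := [seq x <- s | predC (fun x => f x == n.+1) x].
have hs' : size s' = count (predC (fun x => f x == n.+1)) s by rewrite size_filter.
have := count_predC (fun x => f x == n.+1) s => hc.
have big' : n * K < size s' by lia.
have [|v hv] := IH s' _ big'.
  move=> x; rewrite mem_filter /= => /andP[hx xs]; have := hs x xs.
  move: hx => /eqP; lia.
exists v; apply: leq_trans hv _; rewrite count_filter; apply: sub_count.
by move=> x /andP[].
Qed.

Lemma mirsky (T : eqType) (I : Type) (lt : I -> rel T) (k : nat) :
  (forall o, irreflexive (lt o)) -> (forall o, transitive (lt o)) ->
  forall (os : seq I) (B : seq T), uniq B ->
  (forall x y, x \in B -> y \in B -> x != y -> has (fun o => lt o x y || lt o y x) os) ->
  k ^ size os < size B ->
  exists o y s, [/\ path (fun a b => lt o b a) y s, y \in B, {subset s <= B} & k <= size s].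
Proof.
move=> irr tr; elim=> [|o os IH] B uB cmp big.
  case: B uB cmp big => [|x [|y B]] //= /andP[]; rewrite in_cons negb_or => /andP[nxy _] _ cmp _.
  have yB : y \in [:: x, y & B] by rewrite !in_cons eqxx orbT.
  by have := cmp x y (mem_head _ _) yB nxy.
set h := ht (lt o) B.
case: (boolP (has (fun x => k < h x) B)) => [/hasP[x xB hx]|/hasPn hB].
  have hpos : 0 < h x by apply: ht_pos.
  have [s [ps sB ss]] := ht_chain (irr o) (tr o) (esym (prednK hpos)).
  by exists o, x, s; split => //; rewrite ss -ltnS prednK.
have [v hv] : exists v, k ^ size os < count (fun x => h x == v) B.
  apply: (pigeon (n := k)); last by rewrite -expnS.
  by move=> x xB; rewrite ht_pos //= leqNgt; apply: hB.
set Bv := [seq x <- B | h x == v].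
have uBv : uniq Bv by apply: filter_uniq.
have cmpv : forall x y, x \in Bv -> y \in Bv -> x != y ->
    has (fun o => lt o x y || lt o y x) os.
  move=> x y; rewrite !mem_filter => /andP[/eqP hx xB] /andP[/eqP hy yB] nxy.
  have := cmp x y xB yB nxy; rewrite /= => /orP[/orP[l|l]|//].
    by have := ht_mono (irr o) (tr o) xB l; rewrite -/h hx hy ltnn.
  by have := ht_mono (irr o) (tr o) yB l; rewrite -/h hx hy ltnn.
have [|o' [y [s [ps yB sB ks]]]] := IH Bv uBv cmpv; first by rewrite size_filter.
exists o', y, s; split => //; first by move: yB; rewrite mem_filter => /andP[].
by move=> z /sB; rewrite mem_filter => /andP[].
Qed.


Open Scope ring_scope.

Definition idx (R : realType) n (S : {fset 'rV[R]_n}) (x : 'rV[R]_n) : nat :=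
  index x (enum_fset S).
Definition ltc (R : realType) n (S : {fset 'rV[R]_n}) (i : 'I_n) (x y : 'rV[R]_n) : bool :=
  (x 0 i < y 0 i) || ((x 0 i == y 0 i) && (idx S x < idx S y)%N).
Definition sgn n (s : {ffun 'I_n -> bool}) (i : 'I_n.+1) : bool :=
  if unlift ord0 i is Some j then s j else true.
Definition lts (R : realType) n (S : {fset 'rV[R]_n.+1}) (s : {ffun 'I_n -> bool})
  (x y : 'rV[R]_n.+1) : bool :=
  [forall i, if sgn s i then ltc S i x y else ltc S i y x].
Definition sigv (R : realType) n (S : {fset 'rV[R]_n.+1}) (x y : 'rV[R]_n.+1)
  : {ffun 'I_n -> bool} := [ffun j => ltc S (lift ord0 j) x y].
Definition Ap (R : realType) n (S : {fset 'rV[R]_n.+1}) s p :=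
  [seq r <- enum_fset S | (r == p) || lts S s p r].
Definition pcol (R : realType) n (S : {fset 'rV[R]_n.+1}) k (Hk : (0 < k)%N) p x : 'I_k :=
  let s := sigv S p x in Ordinal (ltn_pmod (ht (lts S s) (Ap S s p) x) Hk).
Definition le0 (R : realType) n (S : {fset 'rV[R]_n.+1}) (x y : 'rV[R]_n.+1) :=
  (x == y) || ltc S ord0 x y.
Definition tcol (R : realType) n (S : {fset 'rV[R]_n.+1}) k (Hk : (0 < k)%N)
  (T : {fset 'rV[R]_n.+1}) : 'I_k :=
  let s := sort (le0 S) (enum_fset T) in pcol S Hk (nth 0 s 0) (nth 0 s 1).

Lemma ltc_irr (R : realType) n (S : {fset 'rV[R]_n}) i : irreflexive (ltc S i).
Proof. by move=> x; rewrite /ltc ltxx ltnn andbF. Qed.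

Lemma ltc_trans (R : realType) n (S : {fset 'rV[R]_n}) i : transitive (ltc S i).
Proof.
move=> y x z; rewrite /ltc => /orP[h1|/andP[/eqP e1 h1]] /orP[h2|/andP[/eqP e2 h2]].
- by rewrite (lt_trans h1 h2).
- by rewrite -e2 h1.
- by rewrite e1 h2.
- by rewrite e1 e2 eqxx (ltn_trans h1 h2) orbT.
Qed.

Lemma ltc_asym (R : realType) n (S : {fset 'rV[R]_n}) i x y :
  ltc S i x y -> ~~ ltc S i y x.
Proof.
move=> h; apply/negP => h'; have := ltc_trans h h'; by rewrite ltc_irr.
Qed.

Lemma ltc_le (R : realType) n (S : {fset 'rV[R]_n}) i x y :
  ltc S i x y -> x 0 i <= y 0 i.
Proof. by case/orP=> [/ltW //|/andP[/eqP-> _]]. Qed.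

Lemma ltc_total (R : realType) n (S : {fset 'rV[R]_n}) i x y :
  x \in S -> y \in S -> x != y -> ltc S i x y || ltc S i y x.
Proof.
move=> xS yS nxy; rewrite /ltc.
case: (ltgtP (x 0 i) (y 0 i)) => //= e.

case: (ltngtP (idx S x) (idx S y)) => // ei.
have : nth x (enum_fset S) (idx S x) = nth x (enum_fset S) (idx S y) by rewrite ei.
by rewrite !nth_index // => exy; rewrite exy eqxx in nxy.
Qed.

Lemma sgn0 n (s : {ffun 'I_n -> bool}) : sgn s ord0.
Proof. by rewrite /sgn unlift_none. Qed.

Lemma sgn_lift n (s : {ffun 'I_n -> bool}) j : sgn s (lift ord0 j) = s j.
Proof. by rewrite /sgn liftK. Qed.

Lemma lts_irr (R : realType) n (S : {fset 'rV[R]_n.+1}) s : irreflexive (lts S s).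
Proof.
move=> x; apply/negP => /forallP /(_ ord0); by rewrite sgn0 ltc_irr.
Qed.

Lemma lts_trans (R : realType) n (S : {fset 'rV[R]_n.+1}) s : transitive (lts S s).
Proof.
move=> y x z /forallP h1 /forallP h2; apply/forallP => i.
have := h1 i; have := h2 i; case: (sgn s i) => a b.
  exact: ltc_trans b a.
exact: ltc_trans a b.
Qed.

Lemma lts_ltc0 (R : realType) n (S : {fset 'rV[R]_n.+1}) s x y :
  lts S s x y -> ltc S ord0 x y.
Proof. by move=> /forallP /(_ ord0); rewrite sgn0. Qed.

Lemma lts_sig (R : realType) n (S : {fset 'rV[R]_n.+1}) x y :
  x \in S -> y \in S -> x != y -> ltc S ord0 x y -> lts S (sigv S x y) x y.
Proof.
move=> xS yS nxy h0; apply/forallP => i.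
case: (unliftP ord0 i) => [j ->|->]; last by rewrite sgn0.
rewrite sgn_lift /sigv ffunE.
case e: (ltc S (lift ord0 j) x y) => //.
by have := ltc_total (lift ord0 j) xS yS nxy; rewrite e.
Qed.

Lemma sigv_canon (R : realType) n (S : {fset 'rV[R]_n.+1}) s x y :
  lts S s x y -> sigv S x y = s.
Proof.
move=> /forallP h; apply/ffunP => j; rewrite ffunE.
have := h (lift ord0 j); rewrite sgn_lift; case: (s j) => // h'.
by apply/negbTE/ltc_asym.
Qed.

Lemma coord_between (R : realType) n (S : {fset 'rV[R]_n.+1}) s p r q i :
  lts S s p r -> lts S s r q ->
  ((p 0 i <= r 0 i) && (r 0 i <= q 0 i)) || ((q 0 i <= r 0 i) && (r 0 i <= p 0 i)).
Proof.
move=> /forallP /(_ i) h1 /forallP /(_ i) h2.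
case: (sgn s i) h1 h2 => h1 h2.
  by rewrite (ltc_le h1) (ltc_le h2).
by rewrite (ltc_le h1) (ltc_le h2) orbT.
Qed.

Lemma box_convex (R : realType) n (S : {fset 'rV[R]_n.+1}) s H p r q :
  lts S s p r -> lts S s r q -> in_box H p -> in_box H q -> in_box H r.
Proof.
move=> h1 h2 /allP hp /allP hq; apply/allP => [[[i beta] u]] hH.
have := hp _ hH; have := hq _ hH; clear hH; rewrite /halfspace.
have := coord_between i h1 h2.
case: u => /orP[/andP[a b]|/andP[a b]] c d.
- exact: le_trans b c.
- exact: le_trans b d.
- exact: le_trans d a.
- exact: le_trans c a.
Qed.

Lemma le0_trans (R : realType) n (S : {fset 'rV[R]_n.+1}) : transitive (le0 S).
Proof.
move=> y x z; rewrite /le0 => hxy hyz; case/orP: hxy => [/eqP->//|h1].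
case/orP: hyz => [/eqP<-|h2]; first by rewrite h1 orbT.
by rewrite (ltc_trans h1 h2) orbT.
Qed.

Lemma le0_anti (R : realType) n (S : {fset 'rV[R]_n.+1}) : antisymmetric (le0 S).
Proof.
move=> x y /andP[]; rewrite /le0 => /orP[/eqP->//|h1] /orP[/eqP->//|h2].
by have := ltc_asym h1; rewrite h2.
Qed.

Lemma le0_total (R : realType) n (S : {fset 'rV[R]_n.+1}) :
  {in S &, total (le0 S)}.
Proof.
move=> x y xS yS; case: (eqVneq x y) => [->|nxy]; first by rewrite /le0 eqxx.
by case/orP: (ltc_total ord0 xS yS nxy) => h; rewrite /le0 h ?orbT.
Qed.

Lemma choose_v k (i : 'I_k) : exists v, [/\ (2 <= v)%N, (v <= k.+1)%N & (v %% k)%N = i].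
Proof.
have hi := ltn_ord i.
have [h2|h2] := leqP 2 i.
  by exists i; split => //; [lia | apply: modn_small].
case: (leqP k 1) => hk.
  have k1 : k = 1%N by lia.
  have i0 : nat_of_ord i = 0%N by lia.
  exists 2%N; rewrite i0; split => //; [lia|]; by rewrite k1 modn1.
exists (i + k)%N; split; [lia|lia|].
by rewrite modnDr modn_small.
Qed.

Lemma ht_p (R : realType) n (S : {fset 'rV[R]_n.+1}) s p :
  ht (lts S s) (Ap S s p) p = 1%N.
Proof.
rewrite (ht_eq _ _ (@lts_irr _ _ S s) (@lts_trans _ _ S s)); congr succn.
apply: big1_seq => r /andP[lrp]; rewrite mem_filter => /andP[/orP[/eqP e|lpr] _].
  by rewrite e lts_irr in lrp.
by have := lts_trans lpr lrp; rewrite lts_irr.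
Qed.

Close Scope ring_scope.

Unset Implicit Arguments.
Open Scope fset_scope.

Theorem theorem8 (R : realType) (t d k : nat) :
  (2 <= t)%N -> (0 < d)%N -> (0 < k)%N ->
  exists m : nat, (m <= k ^ (2 ^ (d - 1)) + t - 1)%N /\
    forall S : {fset 'rV[R]_d},
    exists c : {fset 'rV[R]_d} -> 'I_k,
      forall H : seq ('I_d * R * bool),
        (m <= #|` box_points H S|)%N ->
        forall i : 'I_k,
          exists T : {fset 'rV[R]_d},
            [/\ T `<=` box_points H S, #|` T| = t & c T = i].
Proof.
move=> t2 d0 k0; case: d d0 => [//|d'] _.
exists (k ^ (2 ^ (d'.+1 - 1)) + t - 1)%N; split => // S.
rewrite subSS subn0.
exists (tcol S k0) => H hm i.
set P := box_points H S.
have PE : forall x, (x \in P) = (x \in S) && in_box H x.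
  by move=> x; rewrite /P /box_points !inE.
have PS : {subset P <= S} by move=> x; rewrite PE => /andP[].
set sP := sort (le0 S) (enum_fset P).
have sP_sorted : sorted (le0 S) sP.
  apply: (sort_sorted_in (@le0_total _ _ S)); apply/allP => x xP; exact: PS.
have sP_uniq : uniq sP by rewrite sort_uniq; exact: fset_uniq.
have sP_mem : sP =i P by exact: mem_sort.
have sP_size : size sP = #|` P| by rewrite size_sort.
have hm' : (k ^ (2 ^ d') + t - 1 <= size sP)%N by rewrite sP_size.
set N := (size sP - (t - 2))%N.
set P' := take N sP. set U := drop N sP.
have hsplit : sP = P' ++ U by rewrite cat_take_drop.
have sizeP' : size P' = N by rewrite size_takel // /N leq_subr.
have sizeU : size U = (t - 2)%N by rewrite size_drop /N; lia.
have bigP' : (k ^ 2 ^ d' < size P')%N by rewrite sizeP' /N; lia.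
have PU : forall a b, a \in P' -> b \in U -> ltc S ord0 a b.
  move=> a b aP bU.
  have : allrel (le0 S) P' U.
    by move: sP_sorted; rewrite (sorted_pairwise (@le0_trans _ _ S)) hsplit pairwise_cat => /and3P[].
  move=> /allrelP /(_ a b aP bU); rewrite /le0 => /orP[/eqP eab|//].
  have : uniq (P' ++ U) by rewrite -hsplit.
  by rewrite cat_uniq => /and3P[_ /hasPn /(_ b bU)]; rewrite /= -eab aP.
have P'P : {subset P' <= P} by move=> x xP; rewrite -sP_mem hsplit mem_cat xP.
have UP : {subset U <= P} by move=> x xP; rewrite -sP_mem hsplit mem_cat xP orbT.
have P'S : {subset P' <= S} by move=> x /P'P /PS.
have uP' : uniq P' by apply: take_uniq.
have cmp : forall x y, x \in P' -> y \in P' -> x != y ->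
    has (fun o => lts S o x y || lts S o y x) (enum {ffun 'I_d' -> bool}).
  move=> x y xP yP nxy; have xS := P'S _ xP; have yS := P'S _ yP.
  case/orP: (ltc_total ord0 xS yS nxy) => h.
    by apply/hasP; exists (sigv S x y); rewrite ?mem_enum // lts_sig.
  by apply/hasP; exists (sigv S y x); rewrite ?mem_enum // lts_sig ?orbT // eq_sym.
have big' : (k ^ size (enum {ffun 'I_d' -> bool}) < size P')%N.
  by rewrite -cardT card_ffun card_bool card_ord.
have [s [y [ch [pch yP' chP' kch]]]] :=
  @mirsky _ _ (fun s => lts S s) k (fun s => @lts_irr _ _ S s)
    (fun s => @lts_trans _ _ S s) (enum {ffun 'I_d' -> bool}) P' uP' cmp big'.
set p := last y ch.
set A := Ap S s p.
set h := ht (lts S s) A.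
have irr := @lts_irr _ _ S s. have tr := @lts_trans _ _ S s.
have ych : {subset y :: ch <= P'}.
  by move=> z; rewrite in_cons => /orP[/eqP->//|/chP'].
have allA : {subset y :: ch <= A}.
  move=> z hz; rewrite mem_filter (P'S _ (ych _ hz)) andbT.
  exact: (path_last_below tr pch hz).
have hy : (size ch < h y)%N := path_ht irr tr pch allA.
have [v [v2 vk vi]] := choose_v i.
have heq : h y = (v + (h y - v))%N by rewrite subnKC //; lia.
have [z hz zy] := @ht_down _ _ A irr tr (h y - v)%N y v heq (ltnW v2).
have zA : z \in A.
  by case/orP: zy => [/eqP->|/andP[_ //]]; apply: allA; exact: mem_head.
have hp1 : h p = 1%N by apply: ht_p.
have znp : z != p.
  apply/eqP => e; have e1 : h z = 1%N by rewrite e.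
  have e2 : v = 1%N := etrans (esym hz) e1.
  by rewrite e2 in v2.
have lpz : lts S s p z.
  by move: zA; rewrite mem_filter => /andP[/orP[e|//] _]; rewrite e in znp.
have pP' : p \in P' by apply: ych; exact: mem_last.
have zP' : z \in P'.
  case/orP: zy => [/eqP->//|/andP[lzy _]].
  have zS : z \in S by move: zA; rewrite mem_filter => /andP[].
  have zP : z \in P.
    rewrite PE zS /=.
    have := P'P _ pP'; rewrite PE => /andP[_ bp].
    have := P'P _ yP'; rewrite PE => /andP[_ bq].
    exact: box_convex lpz lzy bp bq.
  have : z \in P' ++ U by rewrite -hsplit sP_mem.
  rewrite mem_cat => /orP[//|zU].
  have a := PU y z yP' zU; have b := lts_ltc0 lzy.
  by have := ltc_asym a; rewrite b.
have pU : p \notin U by apply/negP => pU; have := PU p p pP' pU; rewrite ltc_irr.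
have zU : z \notin U by apply/negP => zU; have := PU z z zP' zU; rewrite ltc_irr.
have uU : uniq U by apply: drop_uniq.
have uT : uniq [:: p, z & U].
  by rewrite /= in_cons negb_or eq_sym znp pU zU uU.
have pS : p \in S by apply: P'S.
have zS : z \in S by apply: P'S.
have US : {subset U <= S} by move=> x /UP /PS.
exists (seq_fset tt [:: p, z & U]); split.
- apply/fsubsetP => x; rewrite seq_fsetE !in_cons.
  case/orP=> [/eqP->|]; first exact: P'P.
  case/orP=> [/eqP->|/UP//]; exact: P'P.
- rewrite size_seq_fset (undup_id uT).
  have -> : size [:: p, z & U] = (size U).+2 by [].
  by rewrite sizeU -addn2 subnK.
have es : sort (le0 S) (enum_fset (seq_fset tt [:: p, z & U])) = [:: p, z & U].
  apply: (sorted_eq (@le0_trans _ _ S) (@le0_anti _ _ S)).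
  - apply: (sort_sorted_in (@le0_total _ _ S)); apply/allP => x.
    by rewrite seq_fsetE !in_cons => /orP[/eqP->|/orP[/eqP->|/US]].
  - rewrite /= (path_sortedE (@le0_trans _ _ S)); apply/andP; split.
      by rewrite /le0 (lts_ltc0 lpz) orbT.
    apply/andP; split; last by apply: drop_sorted.
    by apply/allP => x xU; rewrite /le0 (PU _ _ zP' xU) orbT.
  - rewrite perm_sort; apply: uniq_perm => //; first exact: fset_uniq.
    by move=> x; rewrite seq_fsetE.
rewrite /tcol es /pcol; apply: val_inj => /=.
rewrite (sigv_canon lpz).
have e3 : ht (lts S s) (Ap S s p) z = v := hz.
by rewrite e3 vi.
Qed.
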